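(* In the sleeping multi-armed bandit setting, let $(\ell_t)_{t=1}^T$ be an arbitrary deterministic sequence of loss vectors in $[0,1]^K$ fixed in advance (oblivious adversary), and let $(S_t)_{t\ge1}$ be i.i.d. random nonempty subsets of $[K]$ (independent of the learner's internal randomness at the same round). Then for any algorithm, $$\max_{\pi}R_T^{\mathrm{policy}}(\pi)=\max_{\sigma}\mathbb E\big[R_T^{\mathrm{ordering}}(\sigma)\big],$$ where $\pi$ ranges over all policies and $\sigma$ over all orderings of $[K]$.
   Context: Sleeping multi-armed bandit setting: $K$ arms $[K]$. At each round $t$ a nonempty availability set $S_t\subseteq[K]$ is revealed, the learner (possibly randomized) selects $k_t\in S_t$ and observes $\ell_t(k_t)$. An ordering is a permutation $\sigma=(\sigma_1,\dots,\sigma_K)$ of $[K]$; for nonempty $S\subseteq[K]$, $\sigma(S)=\sigma_m$ with $m=\min\{i:\sigma_i\in S\}$. Ordering regret: $R_T^{\mathrm{ordering}}(\sigma)=\sum_{t=1}^T\big(\ell_t(k_t)-\ell_t(\sigma(S_t))\big)$. A policy is a map $\pi$ from nonempty subsets of $[K]$ to $[K]$ with $\pi(S)\in S$. Policy regret: $R_T^{\mathrm{policy}}(\pi)=\mathbb E\big[\sum_{t=1}^T\ell_t(k_t)-\sum_{t=1}^T\ell_t(\pi(S_t))\big]$, the expectation being over availabilities and the learner's randomness. *)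

(* Defs.v *)
From HB Require Import structures.
From mathcomp Require Import all_boot all_order all_algebra all_fingroup.
From mathcomp Require Import all_classical all_reals all_analysis.
Set Implicit Arguments. Unset Strict Implicit. Unset Printing Implicit Defensive.
Import Order.TTheory GRing.Theory Num.Theory.
Local Open Scope ring_scope.

(* An ordering is a permutation s : {perm 'I_K}, read as the
   sequence (s 0, s 1, ..., s (K-1)). *)
Definition ord_sel (K : nat) (s : {perm 'I_K}) (S : {set 'I_K}) : option 'I_K :=
  if [pick m | s m \in S] is Some m0
  then Some (s [arg min_(m < m0 | s m \in S) (m : nat)])
  else None.

(* A policy: a map from subsets to arms with pi S \in S for every nonempty S
   (its value on the empty set is irrelevant). *)
Definition is_policy (K : nat) (pi : {ffun {set 'I_K} -> 'I_K}) : bool :=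
  [forall S : {set 'I_K}, (S != finset.set0) ==> (pi S \in S)].

Definition ord_loss (R : realType) (T K : nat) (l : 'I_T -> 'I_K -> R)
  (s : {perm 'I_K}) (t : 'I_T) (S : {set 'I_K}) : R :=
  if ord_sel s S is Some k then l t k else 0.

Definition ordering_regret (Omega : Type) (R : realType) (T K : nat)
  (l : 'I_T -> 'I_K -> R) (S : 'I_T -> Omega -> {set 'I_K})
  (k : 'I_T -> Omega -> 'I_K) (s : {perm 'I_K}) : Omega -> R :=
  fun w => \sum_(t < T) (l t (k t w) - ord_loss l s t (S t w)).

Definition policy_regret_rv (Omega : Type) (R : realType) (T K : nat)
  (l : 'I_T -> 'I_K -> R) (S : 'I_T -> Omega -> {set 'I_K})
  (k : 'I_T -> Omega -> 'I_K) (pi : {ffun {set 'I_K} -> 'I_K}) : Omega -> R :=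
  fun w => \sum_(t < T) l t (k t w) - \sum_(t < T) l t (pi (S t w)).

Local Open Scope classical_set_scope.
Definition iid_sets (d : measure_display) (Omega : measurableType d)
  (R : realType) (P : probability Omega R) (T K : nat)
  (S : 'I_T -> Omega -> {set 'I_K}) : Prop :=
  [/\ (forall t (A : {set 'I_K}), measurable [set w | S t w = A]),
      (forall t t' (A : {set 'I_K}),
          P [set w | S t w = A] = P [set w | S t' w = A]) &
      (forall A : 'I_T -> {set {set 'I_K}},
          P (\bigcap_(t in [set: 'I_T]) [set w | S t w \in A t])
          = (\prod_(t < T) P [set w | S t w \in A t])%E)].

(* Main.v *)
Require Import Defs.
From HB Require Import structures.
From mathcomp Require Import all_boot all_order all_algebra all_fingroup.
From mathcomp Require Import all_classical all_reals all_analysis.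
Import Order.TTheory GRing.Theory Num.Theory.
Local Open Scope ring_scope.
Section Helpers.
Local Open Scope classical_set_scope.
Set Implicit Arguments. Unset Strict Implicit.

Lemma ord_sel_in K (s : {perm 'I_K}) A i : ord_sel s A = Some i -> i \in A.
Proof.
rewrite /ord_sel; case: pickP => [m0 Hm0|//] [<-].
by case: arg_minnP.
Qed.

Lemma ord_sel_ne K (s : {perm 'I_K}) (A : {set 'I_K}) :
  A != finset.set0 -> exists i, ord_sel s A = Some i.
Proof.
case/set0Pn => x xA; rewrite /ord_sel; case: pickP => [m0 _|H]; first by eexists.
by move: (H (s^-1 x)%g); rewrite permKV xA.
Qed.

Lemma ord_sel_min (R : realType) K (L : 'I_K -> R) (s : {perm 'I_K})
  (mono : forall m m' : 'I_K, (m <= m')%N -> L (s m) <= L (s m')) A i j :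
  ord_sel s A = Some i -> j \in A -> L i <= L j.
Proof.
rewrite /ord_sel; case: pickP => [m0 Hm0|//] [<-] jA.
case: arg_minnP => // m _ Hm.
have := Hm (s^-1 j)%g; rewrite permKV => /(_ jA) /mono.
by rewrite permKV.
Qed.

Lemma sort_perm (R : realType) K (x0 : 'I_K) (L : 'I_K -> R) :
  exists s : {perm 'I_K}, forall m m' : 'I_K, (m <= m')%N -> L (s m) <= L (s m').
Proof.
pose r := sort (fun i j => L i <= L j) (enum 'I_K).
have sr : size r = K by rewrite size_sort size_enum_ord.
have ur : uniq r by rewrite sort_uniq enum_uniq.
have finj : injective (fun m : 'I_K => nth x0 r m).
  move=> m m' /eqP; rewrite nth_uniq ?sr // => /eqP; exact: val_inj.
exists (perm finj) => m m' mm'; rewrite !permE.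
have tr : transitive (fun i j : 'I_K => L i <= L j) by move=> a b c; exact: le_trans.
have rf : reflexive (fun i j : 'I_K => L i <= L j) by move=> a.
have so : sorted (fun i j : 'I_K => L i <= L j) r by apply: sort_sorted => a b; exact: le_total.
have := sorted_leq_nth tr rf x0 so; apply; rewrite ?inE ?sr //.
Qed.

Lemma int_lin (d : measure_display) (Omega : measurableType d)
  (R : realType) (P : probability Omega R) (I : finType) (c : I -> R)
  (E : I -> set Omega) (mE : forall i, measurable (E i)) :
  (\int[P]_w (\sum_(i : I) c i * \1_(E i) w)%:E =
  (\sum_(i : I) c i * fine (P (E i)))%:E)%E.
Proof.
under eq_integral do rewrite -sumEFin.
rewrite integral_sum //; last first.
  move=> i; rewrite /=.
  under eq_fun do rewrite EFinM.
  apply: integrableZl => //; exact: integrable_indic.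
rewrite -sumEFin; apply: eq_bigr => i _.
under eq_integral do rewrite EFinM.
rewrite integralZl //; last exact: integrable_indic.
rewrite integral_indic // setIT EFinM fineK //.
exact: fin_num_measure.
Qed.

Lemma sum_indic (Omega : Type) (R : realType) (F : finType) (c : F -> R)
  (g : Omega -> F) w :
  \sum_(i : F) c i * \1_([set w | g w = i]) w = c (g w).
Proof.
rewrite (bigD1 (g w)) //= big1 ?addr0.
  by rewrite indicE mem_set // mulr1.
move=> i /eqP ni; rewrite indicE memNset ?mulr0 //= => e; exact: ni.
Qed.

Lemma E_pol (d : measure_display) (Omega : measurableType d)
  (R : realType) (P : probability Omega R) (T K : nat)
  (l : 'I_T -> 'I_K -> R)
  (S : 'I_T -> Omega -> {set 'I_K})
  (hSm : forall t (A : {set 'I_K}), measurable [set w | S t w = A])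
  (k : 'I_T -> Omega -> 'I_K)
  (hkm : forall t (i : 'I_K), measurable [set w | k t w = i])
  (pi : {ffun {set 'I_K} -> 'I_K}) :
  ('E_P[policy_regret_rv l S k pi] =
   ((\sum_(t < T) \sum_(i < K) l t i * fine (P [set w | k t w = i]))
    - \sum_(t < T) \sum_(A : {set 'I_K}) l t (pi A) * fine (P [set w | S t w = A]))%:E)%E.
Proof.
pose I := (('I_T * 'I_K) + ('I_T * {set 'I_K}))%type.
pose c (z : I) : R := match z with inl x => l x.1 x.2 | inr y => - l y.1 (pi y.2) end.
pose E (z : I) : set Omega := match z with
  inl x => [set w | k x.1 w = x.2] | inr y => [set w | S y.1 w = y.2] end.
have mE : forall z, measurable (E z) by case=> [[t i]|[t A]] /=.
have -> : policy_regret_rv l S k pi = fun w => \sum_(z : I) c z * \1_(E z) w.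
  apply: funext => w; rewrite /policy_regret_rv big_sumType /=.
  congr (_ + _).
    rewrite -(pair_big xpredT xpredT (fun a b => l a b * \1_([set w | k a w = b]) w)) /=.
    by apply: eq_bigr => t _; rewrite (sum_indic (fun i => l t i) (k t)).
  rewrite -(pair_big xpredT xpredT (fun a b => - l a (pi b) * \1_([set w | S a w = b]) w)) /=.
  rewrite -sumrN; apply: eq_bigr => t _.
  rewrite (eq_bigr (fun A => - l t (pi A) * \1_([set w | S t w = A]) w)) //.
  by rewrite (sum_indic (fun A => - l t (pi A)) (S t)).
rewrite unlock int_lin //; congr (_ %:E).
rewrite big_sumType /=.
rewrite -(pair_big xpredT xpredT (fun a b => l a b * fine (P [set w | k a w = b]))) /=.
rewrite -(pair_big xpredT xpredT (fun a b => - l a (pi b) * fine (P [set w | S a w = b]))) /=.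
rewrite -sumrN.
congr (_ + _); apply: eq_bigr => t _; rewrite -sumrN; apply: eq_bigr => A _.
by rewrite mulNr.
Qed.

Lemma sum_const_q (R : realType) T (a b q : 'I_T -> R)
  (q0 : forall t, 0 <= q t) (qc : forall t t', q t = q t')
  (hab : \sum_(t < T) a t <= \sum_(t < T) b t) :
  \sum_(t < T) a t * q t <= \sum_(t < T) b t * q t.
Proof.
move: a b q q0 qc hab; case: T => [|T] a b q q0 qc hab; first by rewrite !big_ord0.
have e : forall c : 'I_T.+1 -> R, \sum_(t < T.+1) c t * q t = (\sum_(t < T.+1) c t) * q ord0.
  by move=> c; rewrite mulr_suml; apply: eq_bigr => t _; rewrite (qc t ord0).
by rewrite !e ler_wpM2r.
Qed.

End Helpers.

Theorem mainTheorem8 (d : measure_display) (Omega : measurableType d)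
  (R : realType) (P : probability Omega R) (T K : nat) (hK : (0 < K)%N)
  (l : 'I_T -> 'I_K -> R)
  (hl : forall t i, 0 <= l t i <= 1)
  (S : 'I_T -> Omega -> {set 'I_K})
  (hS : iid_sets P S)
  (hSne : forall t w, S t w != finset.set0)
  (k : 'I_T -> Omega -> 'I_K)
  (hkm : forall t (i : 'I_K), measurable [set w | k t w = i]%classic)
  (hkS : forall t w, k t w \in S t w) :
  (\big[maxe/-oo]_(pi : {ffun {set 'I_K} -> 'I_K} | is_policy pi)
      'E_P[policy_regret_rv l S k pi]
   = \big[maxe/-oo]_(s : {perm 'I_K}) 'E_P[ordering_regret l S k s])%E.
Proof.
Local Open Scope classical_set_scope.
case: hS => hSm hSid _.
pose x0 := Ordinal hK.
pose L i := \sum_(t < T) l t i.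
have [ss mono] := sort_perm x0 L.
pose pis (s : {perm 'I_K}) := [ffun A => odflt x0 (ord_sel s A)].
have pol : forall s, is_policy (pis s).
  move=> s; apply/forallP => A; apply/implyP => /(ord_sel_ne s) [i Hi].
  by rewrite ffunE Hi /=; exact: ord_sel_in Hi.
have oeq : forall s, ordering_regret l S k s = policy_regret_rv l S k (pis s).
  move=> s; apply: funext => w; rewrite /ordering_regret /policy_regret_rv -sumrB.
  apply: eq_bigr => t _; rewrite /ord_loss ffunE.
  by have [i ->] := ord_sel_ne s (hSne t w).
apply/eqP; rewrite eq_le; apply/andP; split.
- apply: bigmax_le; first by rewrite leNye.
  move=> pi Hpi.
  apply: le_trans; last exact: (le_bigmax _ _ ss).
  rewrite oeq !E_pol // lee_fin lerD2l lerN2.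
  rewrite (exchange_big _ _ _ _ _ (fun t A => l t (pis ss A) * _)).
  rewrite (exchange_big _ _ _ _ _ (fun t A => l t (pi A) * _)).
  apply: ler_sum => A _.
  have [->|An0] := eqVneq A finset.set0.
    have z : forall t, fine (P [set w | S t w = finset.set0]) = 0.
      move=> t; have -> : [set w | S t w = finset.set0] = set0.
        by apply/seteqP; split => w //= e; move: (hSne t w); rewrite e eqxx.
      by rewrite measure0.
    by rewrite !big1 // => t _; rewrite z mulr0.
  apply: sum_const_q.
  + by move=> t; apply: fine_ge0; exact: measure_ge0.
  + by move=> t t'; rewrite (hSid t t').
  + have [i Hi] := ord_sel_ne ss An0.
    rewrite ffunE Hi /=.
    apply: (ord_sel_min mono Hi).
    by move/forallP: Hpi => /(_ A); rewrite An0.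
- apply: bigmax_le; first by rewrite leNye.
  move=> s _; rewrite oeq.
  exact: (le_bigmax_cond _ _ (pol s)).
Qed.
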